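(* Problem $(\overline{\mathrm{P}})$ is a restriction of problem (P). That is, whenever $(\mathbf{x}^0,\mathbf{x}^\uparrow,\mathbf{x}^\downarrow)$ together with some auxiliary variables is feasible for $(\overline{\mathrm{P}})$, there exist auxiliary variables with which $(\mathbf{x}^0,\mathbf{x}^\uparrow,\mathbf{x}^\downarrow)$ is feasible for (P). The two problems have the same objective.
   Context: Let $K$ be a positive integer, $\Delta t>0$, $T=K\Delta t$, $\mathcal{K}=\{1,\dots,K\}$, $0\le\underline y\le\bar y$, $\underline x\le0\le\bar x$, $\eta^{c},\eta^{d}\in(0,1)$, $\Delta\eta=1/\eta^{d}-\eta^{c}$, $y_0\ge0$ and $\gamma\in[0,T]$. Let $c$ and $\phi$ be real-valued cost functions. Problem (P) minimizes $c(\mathbf{x}^0,\mathbf{x}^\uparrow,\mathbf{x}^\downarrow)+\phi(\mathbf{x}^0,\mathbf{x}^\uparrow,\mathbf{x}^\downarrow,y_0)$. Its variables are $\mathbf{x}^0\in\mathbb{R}^K$; $\mathbf{x}^\uparrow,\mathbf{x}^\downarrow\in\mathbb{R}^K_+$; $\boldsymbol\alpha,\boldsymbol\beta\in\mathbb{R}^K$; $\underline{\boldsymbol\lambda},\bar{\boldsymbol\lambda}\in\mathbb{R}^K_+$; $\underline{\boldsymbol\Lambda}_k\in\mathbb{R}^k_+$ and $\bar{\boldsymbol\Lambda}_k\in\mathbb{R}^k$ for $k\in\mathcal{K}$; and $\upsilon_{1k},\upsilon_{2k}\in\{0,1\}$ for $k\le K-1$. Its constraints are: (a) $x^0_k+x^\uparrow_k\le\bar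 x$ and $x^0_k-x^\downarrow_k\ge\underline x$; (b) $y_0-\gamma\underline\lambda_k-\Delta t\sum_{l\le k}(\alpha_l+\underline\Lambda_{kl})\ge\underline y$; (c) $\alpha_k\ge\eta^{c}x^0_k$, $\alpha_k\ge x^0_k/\eta^{d}$, $\beta_k\ge\eta^{c}(x^0_k+x^\uparrow_k)$ and $\beta_k\ge(x^0_k+x^\uparrow_k)/\eta^{d}$; (d) $\underline\Lambda_{kl}+\underline\lambda_k+\alpha_l-\beta_l\ge0$ for $l\le k$; (e) $y_0+\gamma\bar\lambda_k+\Delta t\sum_{l\le k}\bar\Lambda_{kl}\le\bar y$; (f) $\bar\Lambda_{kk}\ge-\eta^{c}x^0_k$, $\bar\Lambda_{kk}\ge\eta^{c}(x^\downarrow_k-x^0_k)-\bar\lambda_k$ and $\bar\Lambda_{kk}\ge0$; (g) for $k\le K-1$: $(1-\upsilon_{1k})\underline x\le x^0_k-x^\downarrow_k\le\upsilon_{1k}\bar x$ and $\upsilon_{2k}\underline x\le x^0_k\le(1-\upsilon_{2k})\bar x$; (h) for $l<k$: - $\bar\Lambda_{kl}\ge\frac{x^\downarrow_l-x^0_l}{\eta^{d}}-\bar\lambda_k+(1-\upsilon_{1l})\Delta\eta\,\underline x$, - $\bar\Lambda_{kl}\ge-\frac{x^0_l}{\eta^{d}}+\upsilon_{2l}\Delta\eta\,\underline x$, - $\bar\Lambda_{kl}\ge\eta^{c}(x^\downarrow_l-x^0_l)-\bar\lambda_k-\upsilon_{1l}\Delta\eta\,\bar x$, - $\bar\Lambda_{kl}\ge-\eta^{c}x^0_l-(1-\upsilon_{2l})\Delta\eta\,\bar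 x$; (i) for $l<k$: $\bar\Lambda_{kl}x^\downarrow_l+\bar\lambda_kx^0_l\ge\upsilon_{2l}\frac{\underline x(\bar x-\underline x)}{\eta^{d}}-\upsilon_{1l}\frac{\bar x^2}{4\eta^{d}}$. All unqualified indices range over $\mathcal{K}$. Problem $(\overline{\mathrm{P}})$ has the same objective and variables as (P), plus additional binaries $\upsilon_{3k}\in\{0,1\}$ for $k\le K-1$. Its constraints are (a)–(h), without (i), together with: - for $k\le K-1$: $x^\downarrow_k-(1-\eta^{c}\eta^{d})x^0_k-\eta^{d}\bar\lambda_k\ge-((2-\eta^{c}\eta^{d})\bar x-\underline x)(1-\upsilon_{3k})$; - for $k\le K-1$: $x^\downarrow_k-(1-\eta^{c}\eta^{d})x^0_k-\eta^{d}\bar\lambda_k\le\upsilon_{3k}(\eta^{c}\eta^{d}\bar x-\underline x)$; - for $l<k$: $\bar\Lambda_{kl}\ge-\eta^{c}x^0_l-(\upsilon_{1l}+1-\upsilon_{3l})\Delta\eta\,\bar x$; - for $l<k$: $\bar\Lambda_{kl}\ge\frac{x^\downarrow_l-x^0_l}{\eta^{d}}-\bar\lambda_k+(\upsilon_{2l}+\upsilon_{3l})\Delta\eta\,\underline x$. *)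

(* Defs.v *)
(* Vectors in R^K are encoded as
   functions nat -> R indexed by 1..K (values outside are irrelevant);
   Lambda_k in R^k is encoded as Lam k l for 1 <= l <= k;
   binaries upsilon in {0,1} are booleans, injected into R by %:R. *)
From mathcomp Require Import all_boot all_order all_algebra.
Set Implicit Arguments. Unset Strict Implicit. Unset Printing Implicit Defensive.
Import Order.TTheory GRing.Theory Num.Theory.
Local Open Scope ring_scope.

Section Defs.
Variable R : realFieldType.

Definition deta (etac etad : R) : R := 1 / etad - etac.

Definition common_constraints (K : nat) (dt ylo yhi xlo xhi etac etad y0 gamma : R)
  (x0 xu xd alpha beta laml lamu : nat -> R) (Laml Lamu : nat -> nat -> R)
  (u1 u2 : nat -> bool) : Prop :=
  (forall k, (1 <= k <= K)%N ->
     0 <= xu k /\ 0 <= xd k /\ 0 <= laml k /\ 0 <= lamu k) /\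
  (forall k l, (1 <= l <= k)%N -> (k <= K)%N -> 0 <= Laml k l) /\
  (* (a) *)
  (forall k, (1 <= k <= K)%N -> x0 k + xu k <= xhi /\ x0 k - xd k >= xlo) /\
  (* (b) *)
  (forall k, (1 <= k <= K)%N ->
     y0 - gamma * laml k - dt * (\sum_(1 <= l < k.+1) (alpha l + Laml k l)) >= ylo) /\
  (* (c) *)
  (forall k, (1 <= k <= K)%N ->
     alpha k >= etac * x0 k /\ alpha k >= x0 k / etad /\
     beta k >= etac * (x0 k + xu k) /\ beta k >= (x0 k + xu k) / etad) /\
  (* (d) *)
  (forall k l, (1 <= l <= k)%N -> (k <= K)%N ->
     Laml k l + laml k + alpha l - beta l >= 0) /\
  (* (e) *)
  (forall k, (1 <= k <= K)%N ->
     y0 + gamma * lamu k + dt * (\sum_(1 <= l < k.+1) Lamu k l) <= yhi) /\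
  (* (f) *)
  (forall k, (1 <= k <= K)%N ->
     Lamu k k >= - (etac * x0 k) /\
     Lamu k k >= etac * (xd k - x0 k) - lamu k /\
     Lamu k k >= 0) /\
  (* (g) *)
  (forall k, (1 <= k <= K - 1)%N ->
     (1 - (u1 k)%:R) * xlo <= x0 k - xd k /\ x0 k - xd k <= (u1 k)%:R * xhi /\
     (u2 k)%:R * xlo <= x0 k /\ x0 k <= (1 - (u2 k)%:R) * xhi) /\
  (* (h) *)
  (forall k l, (1 <= l)%N -> (l < k)%N -> (k <= K)%N ->
     Lamu k l >= (xd l - x0 l) / etad - lamu k + (1 - (u1 l)%:R) * deta etac etad * xlo /\
     Lamu k l >= - (x0 l / etad) + (u2 l)%:R * deta etac etad * xlo /\
     Lamu k l >= etac * (xd l - x0 l) - lamu k - (u1 l)%:R * deta etac etad * xhi /\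
     Lamu k l >= - (etac * x0 l) - (1 - (u2 l)%:R) * deta etac etad * xhi).

Definition feasP (K : nat) (dt ylo yhi xlo xhi etac etad y0 gamma : R)
  (x0 xu xd alpha beta laml lamu : nat -> R) (Laml Lamu : nat -> nat -> R)
  (u1 u2 : nat -> bool) : Prop :=
  common_constraints K dt ylo yhi xlo xhi etac etad y0 gamma
    x0 xu xd alpha beta laml lamu Laml Lamu u1 u2 /\
  (* (i) *)
  (forall k l, (1 <= l)%N -> (l < k)%N -> (k <= K)%N ->
     Lamu k l * xd l + lamu k * x0 l >=
       (u2 l)%:R * (xlo * (xhi - xlo) / etad) - (u1 l)%:R * (xhi ^+ 2 / (4 * etad))).

Definition feasPbar (K : nat) (dt ylo yhi xlo xhi etac etad y0 gamma : R)
  (x0 xu xd alpha beta laml lamu : nat -> R) (Laml Lamu : nat -> nat -> R)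
  (u1 u2 u3 : nat -> bool) : Prop :=
  common_constraints K dt ylo yhi xlo xhi etac etad y0 gamma
    x0 xu xd alpha beta laml lamu Laml Lamu u1 u2 /\
  (forall k, (1 <= k <= K - 1)%N ->
     xd k - (1 - etac * etad) * x0 k - etad * lamu k >=
       - (((2 - etac * etad) * xhi - xlo) * (1 - (u3 k)%:R)) /\
     xd k - (1 - etac * etad) * x0 k - etad * lamu k <=
       (u3 k)%:R * (etac * etad * xhi - xlo)) /\
  (forall k l, (1 <= l)%N -> (l < k)%N -> (k <= K)%N ->
     Lamu k l >= - (etac * x0 l) - ((u1 l)%:R + 1 - (u3 l)%:R) * deta etac etad * xhi /\
     Lamu k l >= (xd l - x0 l) / etad - lamu k + ((u2 l)%:R + (u3 l)%:R) * deta etac etad * xlo).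

Definition objective (c : (nat -> R) -> (nat -> R) -> (nat -> R) -> R)
  (phi : (nat -> R) -> (nat -> R) -> (nat -> R) -> R -> R)
  (x0 xu xd : nat -> R) (y0 : R) : R := c x0 xu xd + phi x0 xu xd y0.

End Defs.

(* Main.v *)
Require Import Defs.
From mathcomp Require Import all_boot all_order all_algebra.
From mathcomp Require Import zify ring lra.
Import Order.TTheory GRing.Theory Num.Theory.
Local Open Scope ring_scope.

Lemma iA {R : realFieldType} (k a d L lp : R) :
  0 < k -> 0 <= a -> a <= d -> 0 <= lp -> - (k * a) <= L -> k * (d - a) - lp <= L ->
  0 <= L * d + lp * a.
Proof.
move=> k0 a0 ad lp0 h1 h2.
have d0 : 0 <= d by lra.
case: (lerP (k * d) lp) => Hl.
  have : 0 <= (L + k * a) * d by apply: mulr_ge0; lra.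
  have : 0 <= (lp - k * d) * a by apply: mulr_ge0; lra.
  nra.
have : 0 <= (L - k * (d - a) + lp) * d by apply: mulr_ge0; lra.
have : 0 <= (k * d - lp) * (d - a) by apply: mulr_ge0; lra.
nra.
Qed.

Lemma iB {R : realFieldType} (e a d L lp xhi : R) :
  0 < e -> 0 <= a -> a <= xhi -> 0 <= d -> 0 <= lp -> - (a * e) <= L -> (d - a) * e - lp <= L ->
  - (xhi ^+ 2 * (4^-1 * e)) <= L * d + lp * a.
Proof.
move=> e0 a0 ax d0 lp0 h1 h2.
have hx : 0 <= xhi ^+ 2 * (4^-1 * e).
  apply: mulr_ge0; first exact: sqr_ge0. apply: mulr_ge0; [by rewrite invr_ge0; lra | lra].
case: (lerP (d * e) lp) => Hl.
  have : 0 <= (L + a * e) * d by apply: mulr_ge0; lra.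
  have : 0 <= (lp - d * e) * a by apply: mulr_ge0; lra.
  nra.
have H1 : 0 <= (L - (d - a) * e + lp) * d by apply: mulr_ge0; lra.
case: (lerP a d) => Had.
  have : 0 <= (d * e - lp) * (d - a) by apply: mulr_ge0; lra.
  nra.
have : 0 <= lp * (a - d) by apply: mulr_ge0; lra.
have : 0 <= e * (a - 2 * d) ^+ 2 by apply: mulr_ge0; [lra | exact: sqr_ge0].
have : 0 <= e * ((xhi - a) * (xhi + a)) by apply: mulr_ge0; [lra | apply: mulr_ge0; lra].
have -> : xhi ^+ 2 * (4^-1 * e) = 4^-1 * (xhi ^+ 2 * e) by ring.
move=> h3 h4 h5.
have : 4 * (L * d + lp * a) >= - (xhi ^+ 2 * e) by nra.
have h4' : (4 : R) * 4^-1 = 1 by rewrite mulfV //; lra.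
nra.
Qed.

Lemma iC {R : realFieldType} (e c a d L lp xhi xlo : R) :
  0 < e -> 0 < c -> a <= 0 -> xlo <= a -> xlo <= xhi -> 0 <= d -> 0 <= lp ->
  lp <= (xhi - xlo) * e -> - (c * a) <= L ->
  xlo * (xhi - xlo) * e <= L * d + lp * a.
Proof.
move=> e0 c0 a0 xa xx d0 lp0 lpM h.
have : 0 <= L * d by apply: mulr_ge0; nra.
have : 0 <= ((xhi - xlo) * e - lp) * (- a) by apply: mulr_ge0; lra.
have : 0 <= (xhi - xlo) * e * (a - xlo) by apply: mulr_ge0; [apply: mulr_ge0|]; lra.
nra.
Qed.

Lemma pair_lemma (R : realFieldType) (etac etad xlo xhi a d xu lb lp L : R)
  (u1 u2 u3 : bool) :
  0 < etac < 1 -> 0 < etad < 1 -> xlo <= 0 -> 0 <= xhi ->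
  0 <= d -> 0 <= xu -> a + xu <= xhi -> a - d >= xlo ->
  ((1 - (u1)%:R) * xlo <= a - d /\ a - d <= (u1)%:R * xhi /\
     (u2)%:R * xlo <= a /\ a <= (1 - (u2)%:R) * xhi) ->
  0 <= lb -> (lp = lb \/ lp = (xhi - xlo) / etad) -> lp <= (xhi - xlo) / etad ->
  (L >= (d - a) / etad - lb + (1 - (u1)%:R) * deta etac etad * xlo /\
   L >= - (a / etad) + (u2)%:R * deta etac etad * xlo /\
   L >= etac * (d - a) - lb - (u1)%:R * deta etac etad * xhi /\
   L >= - (etac * a) - (1 - (u2)%:R) * deta etac etad * xhi) ->
  (L >= - (etac * a) - ((u1)%:R + 1 - (u3)%:R) * deta etac etad * xhi /\
   L >= (d - a) / etad - lb + ((u2)%:R + (u3)%:R) * deta etac etad * xlo) ->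
  (L >= (d - a) / etad - lp + (1 - (u1)%:R) * deta etac etad * xlo /\
   L >= - (a / etad) + (u2)%:R * deta etac etad * xlo /\
   L >= etac * (d - a) - lp - (u1)%:R * deta etac etad * xhi /\
   L >= - (etac * a) - (1 - (u2)%:R) * deta etac etad * xhi) /\
  L * d + lp * a >=
       (u2)%:R * (xlo * (xhi - xlo) / etad) - (u1)%:R * (xhi ^+ 2 / (4 * etad)).
Proof.
move=> /andP[c0 c1] /andP[ed0 ed1] xlo0 xhi0 d0 xu0 Ha1 Ha2 Hg lb0 Hlp HlpM Hh Hx.
rewrite /deta invfM mul1r in Hh Hx *.
have e1 : 1 < etad^-1 by rewrite invf_gt1.
move: e1 Hlp HlpM Hh Hx Hg; set e := etad^-1 => e1 Hlp HlpM Hh Hx Hg.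
clearbody e.
have e0 : 0 < e by lra.
have ce : etac <= e by lra.
have F1 : 0 <= (xhi - a) * e by apply: mulr_ge0; lra.
have F6 : 0 <= xhi * e by apply: mulr_ge0; lra.
have F2 : (d - a) * e <= - xlo * e by rewrite ler_pM2r //; lra.
have F3 : etac * (d - a) <= - xlo * e.
  have : etac * (d - a) <= etac * (- xlo) by rewrite ler_pM2l //; lra.
  have : 0 <= (e - etac) * (- xlo) by apply: mulr_ge0; lra.
  lra.
have F4 : 0 <= (e - etac) * (- xlo) by apply: mulr_ge0; lra.
have F5 : 0 <= (e - etac) * xhi by apply: mulr_ge0; lra.
have lp0 : 0 <= lp by case: Hlp => ->; [lra | apply: mulr_ge0; lra].
have hx : 0 <= xhi ^+ 2 * (4^-1 * e).
  apply: mulr_ge0; first exact: sqr_ge0. apply: mulr_ge0; [by rewrite invr_ge0; lra | lra].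
case: Hh => h1 [h2 [h3 h4]]; case: Hx => x1 x2.
have HL0 : - (xhi * e) <= L.
  move: Hg h2 h4 F6 F1 c0; clear; case: u2 => /=; rewrite ?mulr1n ?mulr0n ?subrr ?mul0r ?subr0 ?mul1r ?addr0 => -[_ [_ [g3 g4]]] h2 h4 F6 F1 c0.
    have : 0 <= etac * (- a) by apply: mulr_ge0; lra.
    lra.
  lra.
have B1 : forall b : bool, 0 <= 1 - (b%:R : R) by case => /=; rewrite ?mulr1n ?mulr0n ?subrr ?subr0 ?ler01.
have B2 : forall b : bool, 0 <= (b%:R : R) by move=> b; apply: ler0n.
have G1 : (1 - u1%:R) * (e - etac) * xlo <= 0.
  apply: mulr_ge0_le0 => //; apply: mulr_ge0 => //; lra.
have G3 : 0 <= u1%:R * (e - etac) * xhi.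
  apply: mulr_ge0 => //; apply: mulr_ge0 => //; lra.
have G2 : (u2%:R + u3%:R) * (e - etac) * xlo <= 0.
  apply: mulr_ge0_le0 => //; apply: mulr_ge0 => //; [by apply: addr_ge0 | lra].
have h1' : (d - a) * e - lp + (1 - u1%:R) * (e - etac) * xlo <= L.
  case: Hlp => ->; first exact: h1.
  by clear -HL0 F2 G1; lra.
have h3' : etac * (d - a) - lp - u1%:R * (e - etac) * xhi <= L.
  case: Hlp => ->; first exact: h3.
  by clear -HL0 F3 G3; lra.
have x2' : (d - a) * e - lp + (u2%:R + u3%:R) * (e - etac) * xlo <= L.
  case: Hlp => ->; first exact: x2.
  by clear -HL0 F2 G2; lra.
split; first by split; [exact: h1' | split; [exact: h2 | split; [exact: h3' | exact: h4]]].
move: Hg h2 h4 x1 h1' h3' x2'.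
clear -hx e0 c0 lp0 HlpM d0 Ha1 xu0 Ha2 xlo0 xhi0.
case: u1; case: u2; case: u3 => /= -[g1 [g2 [g3 g4]]] h2 h4 x1 h1 h3 x2.
- have H : xlo * (xhi - xlo) * e <= L * d + lp * a by apply: (@iC _ e etac) => //; lra.
  lra.
- have H : xlo * (xhi - xlo) * e <= L * d + lp * a by apply: (@iC _ e etac) => //; lra.
  lra.
- have H : - (xhi ^+ 2 * (4^-1 * e)) <= L * d + lp * a by apply: iB => //; lra.
  lra.
- have H : - (xhi ^+ 2 * (4^-1 * e)) <= L * d + lp * a by apply: iB => //; lra.
  lra.
- have H : xlo * (xhi - xlo) * e <= L * d + lp * a by apply: (@iC _ e etac) => //; lra.
  lra.
- have H : xlo * (xhi - xlo) * e <= L * d + lp * a by apply: (@iC _ e etac) => //; lra.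
  lra.
- have H : 0 <= L * d + lp * a by apply: (@iA _ etac) => //; lra.
  lra.
- have H : 0 <= L * d + lp * a by apply: (@iA _ e) => //; lra.
  lra.
Qed.

Theorem proposition9 (R : realFieldType) (K : nat) (dt T ylo yhi xlo xhi etac etad y0 gamma : R)
  (c : (nat -> R) -> (nat -> R) -> (nat -> R) -> R)
  (phi : (nat -> R) -> (nat -> R) -> (nat -> R) -> R -> R) :
  (0 < K)%N -> 0 < dt -> T = K%:R * dt ->
  0 <= ylo -> ylo <= yhi -> xlo <= 0 -> 0 <= xhi ->
  0 < etac < 1 -> 0 < etad < 1 -> 0 <= y0 -> 0 <= gamma <= T ->
  forall x0 xu xd : nat -> R,
  (exists (alpha beta laml lamu : nat -> R) (Laml Lamu : nat -> nat -> R)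
          (u1 u2 u3 : nat -> bool),
     feasPbar K dt ylo yhi xlo xhi etac etad y0 gamma
       x0 xu xd alpha beta laml lamu Laml Lamu u1 u2 u3) ->
  exists (alpha beta laml lamu : nat -> R) (Laml Lamu : nat -> nat -> R)
         (u1 u2 : nat -> bool),
    feasP K dt ylo yhi xlo xhi etac etad y0 gamma
      x0 xu xd alpha beta laml lamu Laml Lamu u1 u2 /\
    objective c phi x0 xu xd y0 = objective c phi x0 xu xd y0.
Proof.
move=> K0 dt0 HT ylo0 yy xlo0 xhi0 Hc Hd y00 Hgam x0 xu xd
  [alpha [beta [laml [lamu [Laml [Lamu [u1 [u2 [u3 [Hcom [HU3 HX]]]]]]]]]]].
have ed0 : 0 < etad by case/andP: Hd.
have ed1 : etad < 1 by case/andP: Hd.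
have c0 : 0 < etac by case/andP: Hc.
have c1 : etac < 1 by case/andP: Hc.
have g0 : 0 <= gamma by case/andP: Hgam.
set M := (xhi - xlo) / etad.
have HM1 : xhi - xlo <= M.
  rewrite /M ler_pdivlMr //; nra.
pose lam' := fun k => if lamu k <= M then lamu k else M.
have Hlam : forall k, 0 <= lamu k ->
  [/\ 0 <= lam' k, lam' k <= lamu k, lam' k <= M & (lam' k = lamu k \/ lam' k = M)].
  move=> k Hk; rewrite /lam'; case: ifP => H.
    by split => //; left.
  move/negbT: H; rewrite -ltNge => H.
  split; [lra | lra | lra | by right].
case: Hcom => Hdom [HLd [Ha [Hb [Hcc [Hdd [He [Hf [Hgg Hh]]]]]]]].
have Hpair : forall k l, (1 <= l)%N -> (l < k)%N -> (k <= K)%N ->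
  ((Lamu k l >= (xd l - x0 l) / etad - lam' k + (1 - (u1 l)%:R) * deta etac etad * xlo /\
   Lamu k l >= - (x0 l / etad) + (u2 l)%:R * deta etac etad * xlo /\
   Lamu k l >= etac * (xd l - x0 l) - lam' k - (u1 l)%:R * deta etac etad * xhi /\
   Lamu k l >= - (etac * x0 l) - (1 - (u2 l)%:R) * deta etac etad * xhi) /\
  Lamu k l * xd l + lam' k * x0 l >=
       (u2 l)%:R * (xlo * (xhi - xlo) / etad) - (u1 l)%:R * (xhi ^+ 2 / (4 * etad))).
  move=> k l H1 H2 H3.
  have [Hl [Hk Hl']] : [/\ (1 <= l <= K)%N, (1 <= k <= K)%N & (1 <= l <= K - 1)%N].
    move: H1 H2 H3; clear => H1 H2 H3.
    by split; apply/andP; split; lia.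
  have [_ [dl0 [_ _]]] := Hdom l Hl.
  have [xul0 [_ [_ lk0]]] := Hdom l Hl.
  have [_ [_ [_ lk0']]] := Hdom k Hk.
  have [Ha1 Ha2] := Ha l Hl.
  have [L1 L2 L3 L4] := Hlam k lk0'.
  apply: (@pair_lemma R etac etad xlo xhi (x0 l) (xd l) (xu l) (lamu k) (lam' k) (Lamu k l)
            (u1 l) (u2 l) (u3 l)) => //.
  - exact: Hgg.
  - exact: Hh.
  - exact: HX.
exists alpha, beta, laml, lam', Laml, Lamu, u1, u2.
split; last by [].
split; last by move=> k l H1 H2 H3; case: (Hpair k l H1 H2 H3).
split.
  move=> k Hk; have [? [? [? Hl]]] := Hdom k Hk; have [? ? ? ?] := Hlam k Hl; by split.
do 5 (split; first by []).
split.
  move=> k Hk; have [? [? [? Hl]]] := Hdom k Hk; have [L1 L2 L3 L4] := Hlam k Hl.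
  have := He k Hk.
  have : gamma * lam' k <= gamma * lamu k by apply: ler_wpM2l.
  lra.
split.
  move=> k Hk; have [? [xdk [? Hl]]] := Hdom k Hk; have [L1 L2 L3 L4] := Hlam k Hl.
  have [f1 [f2 f3]] := Hf k Hk.
  split => //; split => //.
  case: L4 => ->; first by [].
  have [_ Hak] := Ha k Hk.
  have : etac * (xd k - x0 k) <= - xlo.
    case: (lerP 0 (xd k - x0 k)) => Hs; nra.
  lra.
split; first by [].
by move=> k l H1 H2 H3; case: (Hpair k l H1 H2 H3).
Qed.
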